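(* Let $W$ be a real $N\times N$ matrix, $M$ a real $n\times N$ matrix with Moore–Penrose pseudoinverse $M^+$ (an $N\times n$ matrix), and for each $i\in\{1,\ldots,N\}$ let $h_i:\mathbb{R}\times\mathbb{R}\to\mathbb{R}$ be analytic. Consider the complete dynamics $\dot x_i=h_i(x_i,y_i)$ with $y_i=\sum_{j=1}^NW_{ij}x_j$, and the least-square reduced dynamics \[\dot X_\mu=\sum_{i=1}^NM_{\mu i}\,h_i(\tilde x_i,\tilde y_i),\qquad \mu\in\{1,\ldots,n\},\] where $\tilde x=M^+X$ and $\tilde y=WM^+X$. Then the reduced dynamics can be expressed in terms of higher-order interactions between the observables as \[\dot X_\mu=\mathcal{C}_\mu+\sum_{d_x=1}^\infty\sum_{\bm\alpha}\mathcal{D}^{(d_x+1)}_{\mu\bm\alpha}X_{\bm\alpha}+\sum_{d_y=1}^\infty\sum_{\bm\beta}\mathcal{W}^{(d_y+1)}_{\mu\bm\beta}X_{\bm\beta}+\sum_{d_x,d_y=1}^\infty\sum_{\bm\alpha,\bm\beta}\mathcal{T}^{(d_x+d_y+1)}_{\mu\bm\alpha\bm\beta}X_{\bm\alpha}X_{\bm\beta},\] where the sums run over multi-indices $\bm\alpha=(\alpha_1,\ldots,\alpha_{d_x})\in\{1,\ldots,n\}^{d_x}$ and $\bm\beta=(\beta_1,\ldots,\beta_{d_y})\in\{1,\ldots,n\}^{d_y}$, $X_{\bm\gamma}=X_{\gamma_1}\cdots X_{\gamma_d}$, $\mathcal{C}_\mu$ is a real constant, and \begin{align*} \mathcal{D}^{(d_x+1)}_{\mu\bm\alpha}&=\sum_{i=1}^Nc_{id_x0}M_{\mu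 i}M^+_{i\alpha_1}\cdots M^+_{i\alpha_{d_x}},\\ \mathcal{W}^{(d_y+1)}_{\mu\bm\beta}&=\sum_{i,j_1,\ldots,j_{d_y}=1}^Nc_{i0d_y}M_{\mu i}W_{ij_1}\cdots W_{ij_{d_y}}M^+_{j_1\beta_1}\cdots M^+_{j_{d_y}\beta_{d_y}},\\ \mathcal{T}^{(d_x+d_y+1)}_{\mu\bm\alpha\bm\beta}&=\sum_{i,j_1,\ldots,j_{d_y}=1}^Nc_{id_xd_y}M_{\mu i}M^+_{i\alpha_1}\cdots M^+_{i\alpha_{d_x}}W_{ij_1}\cdots W_{ij_{d_y}}M^+_{j_1\beta_1}\cdots M^+_{j_{d_y}\beta_{d_y}}, \end{align*} for some real coefficients $c_{id_xd_y}$, $i\in\{1,\ldots,N\}$, $d_x,d_y\in\mathbb{Z}_{\ge0}$. *)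

(* Defs.v *)
From HB Require Import structures.
From mathcomp Require Import all_boot all_order all_algebra.
From mathcomp Require Import all_classical all_reals all_analysis.
Set Implicit Arguments. Unset Strict Implicit. Unset Printing Implicit Defensive.
Import Order.TTheory GRing.Theory Num.Theory.
Import numFieldNormedType.Exports.
Local Open Scope ring_scope.
Local Open Scope classical_set_scope.

Section Defs.
Variable R : realType.

Definition dps (c : nat -> nat -> R) (a b x y : R) (K : nat) : R :=
  \sum_(p < K) \sum_(q < K) c p q * (x - a) ^+ p * (y - b) ^+ q.

Definition analytic_at (h : R -> R -> R) (a b : R) : Prop :=
  exists (c : nat -> nat -> R) (r : R), 0 < r /\
    forall x y, `|x - a| < r -> `|y - b| < r ->
      cvgn (dps (fun p q => `|c p q|) 0 0 `|x - a| `|y - b|) /\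
      dps c a b x y K @[K --> \oo] --> h x y.

Definition is_MP_pinv m N (M : 'M[R]_(m, N)) (Mp : 'M[R]_(N, m)) : Prop :=
  [/\ M *m Mp *m M = M, Mp *m M *m Mp = Mp,
      (M *m Mp)^T = M *m Mp & (Mp *m M)^T = Mp *m M].

Definition reduced_field n N (W : 'M[R]_N) (M : 'M[R]_(n, N))
    (Mp : 'M[R]_(N, n)) (h : 'I_N -> R -> R -> R) (X : 'cV[R]_n)
    (mu : 'I_n) : R :=
  let xt := Mp *m X in
  let yt := W *m xt in
  \sum_(i < N) M mu i * h i (xt i ord0) (yt i ord0).

Definition Xmon n d (X : 'cV[R]_n) (g : {ffun 'I_d -> 'I_n}) : R :=
  \prod_(k < d) X (g k) ord0.

Definition Dten n N (M : 'M[R]_(n, N)) (Mp : 'M[R]_(N, n))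
    (c : 'I_N -> nat -> nat -> R) (dx : nat) (mu : 'I_n)
    (al : {ffun 'I_dx -> 'I_n}) : R :=
  \sum_(i < N) c i dx 0%N * M mu i * \prod_(k < dx) Mp i (al k).

Definition Wten n N (W : 'M[R]_N) (M : 'M[R]_(n, N)) (Mp : 'M[R]_(N, n))
    (c : 'I_N -> nat -> nat -> R) (dy : nat) (mu : 'I_n)
    (be : {ffun 'I_dy -> 'I_n}) : R :=
  \sum_(i < N) \sum_(j : {ffun 'I_dy -> 'I_N})
    c i 0%N dy * M mu i * \prod_(k < dy) W i (j k)
      * \prod_(k < dy) Mp (j k) (be k).

Definition Tten n N (W : 'M[R]_N) (M : 'M[R]_(n, N)) (Mp : 'M[R]_(N, n))
    (c : 'I_N -> nat -> nat -> R) (dx dy : nat) (mu : 'I_n)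
    (al : {ffun 'I_dx -> 'I_n}) (be : {ffun 'I_dy -> 'I_n}) : R :=
  \sum_(i < N) \sum_(j : {ffun 'I_dy -> 'I_N})
    c i dx dy * M mu i * \prod_(k < dx) Mp i (al k)
      * \prod_(k < dy) W i (j k) * \prod_(k < dy) Mp (j k) (be k).

Definition SD n N M Mp c mu (X : 'cV[R]_n) (K : nat) : R :=
  \sum_(1 <= dx < K.+1) \sum_(al : {ffun 'I_dx -> 'I_n})
     @Dten n N M Mp c dx mu al * Xmon X al.

Definition SW n N W M Mp c mu (X : 'cV[R]_n) (K : nat) : R :=
  \sum_(1 <= dy < K.+1) \sum_(be : {ffun 'I_dy -> 'I_n})
     @Wten n N W M Mp c dy mu be * Xmon X be.

Definition ST n N W M Mp c mu (X : 'cV[R]_n) (K : nat) : R :=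
  \sum_(1 <= dx < K.+1) \sum_(1 <= dy < K.+1)
    \sum_(al : {ffun 'I_dx -> 'I_n}) \sum_(be : {ffun 'I_dy -> 'I_n})
     @Tten n N W M Mp c dx dy mu al be * Xmon X al * Xmon X be.

End Defs.

(* Main.v *)
Require Import Defs.
From HB Require Import structures.
From mathcomp Require Import all_boot all_order all_algebra.
From mathcomp Require Import all_classical all_reals all_analysis.
From mathcomp Require Import ring lra.
Import Order.TTheory GRing.Theory Num.Theory.
Import numFieldNormedType.Exports.
Set Implicit Arguments. Unset Strict Implicit. Unset Printing Implicit Defensive.
Local Open Scope ring_scope.
Local Open Scope classical_set_scope.

Section H.
Variable R : realType.

Lemma sum_cvg_fin (N : nat) (f : 'I_N -> nat -> R) (l : 'I_N -> R) :
  (forall i, f i K @[K --> \oo] --> l i) ->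
  (\sum_(i < N) f i K) @[K --> \oo] --> \sum_(i < N) l i.
Proof.
move=> H; apply: cvg_big => //.
exact: add_continuous.
Qed.

Lemma dps_abs_nd (c : nat -> nat -> R) (x y : R) :
  {homo dps (fun p q => `|c p q|) 0 0 `|x| `|y| : n m / (n <= m)%N >-> n <= m}.
Proof.
apply/nondecreasing_seqP => K; rewrite /dps.
rewrite big_ord_recr /=.
have H0 : forall p q : nat, 0 <= `|c p q| * (`|x| - 0) ^+ p * (`|y| - 0) ^+ q.
  by move=> p q; rewrite subr0 !mulr_ge0 ?exprn_ge0.
rewrite -[leLHS]addr0; apply: lerD; last by apply: sumr_ge0 => q _.
apply: ler_sum => p _; rewrite big_ord_recr /= -[leLHS]addr0.
by apply: lerD.
Qed.

Lemma abs_cvg_shift (a : nat -> R) (A : nat -> R) :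
  {homo A : n m / (n <= m)%N >-> n <= m} -> cvgn A ->
  (forall K, \sum_(p < K) `|a p| <= A K) ->
  cvgn (fun K => \sum_(1 <= p < K.+1) a p).
Proof.
move=> And Acv Hb.
have hn : cvgn [normed series a].
  apply: nondecreasing_is_cvgn.
    apply/nondecreasing_seqP => K.
    by rewrite /= !seriesEord /= big_ord_recr /= lerDl.
  exists (limn A) => _ [K _ <-].
  apply: le_trans (nondecreasing_cvgn_le And Acv K).
  by rewrite /= seriesEord /=; apply: Hb.
have := normed_cvg hn.
rewrite -(is_cvg_series_restrict 1).
move=> /cvg_ex [l Hl]; apply/cvg_ex; exists l.
by move: Hl; rewrite -(cvg_shiftS (fun n => \sum_(1 <= p < n) a p)).
Qed.

Definition rowS (c : nat -> nat -> R) (x : R) K := \sum_(1 <= p < K.+1) c p 0%N * x ^+ p.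
Definition colS (c : nat -> nat -> R) (y : R) K := \sum_(1 <= q < K.+1) c 0%N q * y ^+ q.
Definition innS (c : nat -> nat -> R) (x y : R) K :=
  \sum_(1 <= p < K.+1) \sum_(1 <= q < K.+1) c p q * x ^+ p * y ^+ q.

Lemma ordnat (F : nat -> R) n : \sum_(i < n) F i = \sum_(0 <= i < n) F i.
Proof. by rewrite big_mkord. Qed.

Lemma dps_split c x y K :
  dps c 0 0 x y K.+1 = c 0%N 0%N + rowS c x K + colS c y K + innS c x y K.
Proof.
rewrite /dps /rowS /colS /innS !subr0.
rewrite (ordnat (fun p => \sum_(q < K.+1) c p q * x ^+ p * y ^+ q)) big_ltn //.
have E : forall p, \sum_(q < K.+1) c p q * x ^+ p * y ^+ q =
   c p 0%N * x ^+ p + \sum_(1 <= q < K.+1) c p q * x ^+ p * y ^+ q.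
  by move=> p; rewrite (ordnat (fun q => c p q * x ^+ p * y ^+ q)) big_ltn // expr0 mulr1.
rewrite E; under eq_big_nat => p _ do rewrite E.
rewrite big_split /= !expr0 !mulr1.
under [X in _ + X + _ = _]eq_big_nat => q _ do rewrite mulr1.
rewrite -!addrA; congr (_ + _); rewrite !addrA; congr (_ + _); by rewrite addrC.
Qed.

Lemma decomp c r h x y :
  (forall x y, `|x - 0| < r -> `|y - 0| < r ->
      cvgn (dps (fun p q => `|c p q|) 0 0 `|x - 0| `|y - 0|) /\
      dps c 0 0 x y K @[K --> \oo] --> h x y) ->
  `|x| < r -> `|y| < r ->
  exists lr lc li, [/\ rowS c x K @[K --> \oo] --> lr,
     colS c y K @[K --> \oo] --> lc, innS c x y K @[K --> \oo] --> li &
     h x y = c 0%N 0%N + lr + lc + li].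
Proof.
move=> H hx hy.
have [Hab Hd] : _ /\ _ := H x y ltac:(by rewrite subr0) ltac:(by rewrite subr0).
rewrite !subr0 in Hab.
have And := dps_abs_nd c x y.
have g0 : forall p q, 0 <= `|c p q| * (`|x| - 0) ^+ p * (`|y| - 0) ^+ q.
  by move=> p q; rewrite subr0 !mulr_ge0 ?exprn_ge0.
have /cvg_ex [lr Hr] : cvgn (rowS c x).
  apply: (@abs_cvg_shift (fun p => c p 0%N * x ^+ p) _ And Hab) => -[|K]; first by rewrite /dps !big_ord0.
  rewrite /dps; apply: ler_sum => p _; rewrite big_ord_recl /= !subr0 expr0 mulr1.
  rewrite normrM normrX -[leLHS]addr0 lerD //.
  by apply: sumr_ge0 => q _; have := g0 p (bump 0 q); rewrite subr0.
have /cvg_ex [lc Hc] : cvgn (colS c y).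
  apply: (@abs_cvg_shift (fun q => c 0%N q * y ^+ q) _ And Hab) => -[|K]; first by rewrite /dps !big_ord0.
  rewrite /dps [leRHS]big_ord_recl /= -[leLHS]addr0 lerD //; last first.
    by apply: sumr_ge0 => p _; apply: sumr_ge0 => q _.
  apply: ler_sum => q _; rewrite !subr0 expr0 mulr1.
  by rewrite normrM normrX.
exists lr, lc, (h x y - c 0%N 0%N - lr - lc); split => //; last first.
  by ring.
have Hd1 : dps c 0 0 x y K.+1 @[K --> \oo] --> h x y.
  by rewrite (cvg_shiftS (dps c 0 0 x y)).
have E : innS c x y =1 (fun K => dps c 0 0 x y K.+1 - c 0%N 0%N - rowS c x K - colS c y K).
  by move=> K /=; rewrite dps_split; ring.
rewrite (eq_cvg _ _ E); apply: cvgB => //; apply: cvgB => //; apply: cvgB => //.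
exact: cvg_cst.
Qed.

Variables (n N : nat) (W : 'M[R]_N) (M : 'M[R]_(n, N)) (Mp : 'M[R]_(N, n)).
Variable X : 'cV[R]_n.
Let xt i := (Mp *m X) i ord0.
Let yt i := (W *m (Mp *m X)) i ord0.

Lemma L1 i dx : \sum_(al : {ffun 'I_dx -> 'I_n}) \prod_(k < dx) Mp i (al k) * Xmon X al
  = xt i ^+ dx.
Proof.
rewrite /Xmon.
under eq_bigr do rewrite -big_split /=.
rewrite -(bigA_distr_bigA (fun k a => Mp i a * X a ord0)) /=.
by rewrite prodr_const card_ord /xt mxE.
Qed.

Lemma L2 i dy : \sum_(be : {ffun 'I_dy -> 'I_n}) \sum_(j : {ffun 'I_dy -> 'I_N})
   \prod_(k < dy) W i (j k) * \prod_(k < dy) Mp (j k) (be k) * Xmon X be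
  = yt i ^+ dy.
Proof.
rewrite /Xmon exchange_big /=.
have xtE a : \sum_b Mp a b * X b ord0 = xt a by rewrite /xt mxE.
under eq_bigr => j _.
  under eq_bigr do rewrite -mulrA -big_split /=.
  rewrite -mulr_sumr -(bigA_distr_bigA (fun k b => Mp (j k) b * X b ord0)) /=.
  rewrite [X in _ * X](eq_bigr (fun k => xt (j k))); last by move=> k _; rewrite xtE.
  rewrite -big_split /=.
  over.
rewrite -(bigA_distr_bigA (fun k a => W i a * xt a)) /=.
by rewrite prodr_const card_ord /yt mxE.
Qed.

Variable c : 'I_N -> nat -> nat -> R.
Variable mu : 'I_n.

Lemma Dd dx : \sum_(al : {ffun 'I_dx -> 'I_n}) Dten M Mp c mu al * Xmon X al
  = \sum_(i < N) c i dx 0%N * M mu i * xt i ^+ dx.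
Proof.
rewrite /Dten; under eq_bigr do rewrite mulr_suml.
rewrite exchange_big /=; apply: eq_bigr => i _.
rewrite -L1 mulr_sumr; apply: eq_bigr => al _; ring.
Qed.

Lemma Wd dy : \sum_(be : {ffun 'I_dy -> 'I_n}) Wten W M Mp c mu be * Xmon X be
  = \sum_(i < N) c i 0%N dy * M mu i * yt i ^+ dy.
Proof.
rewrite /Wten; under eq_bigr do rewrite mulr_suml.
rewrite exchange_big /=; apply: eq_bigr => i _.
rewrite -L2 mulr_sumr; apply: eq_bigr => be _.
rewrite mulr_suml mulr_sumr; apply: eq_bigr => j _; ring.
Qed.

Lemma Td dx dy : \sum_(al : {ffun 'I_dx -> 'I_n}) \sum_(be : {ffun 'I_dy -> 'I_n})
    Tten W M Mp c mu al be * Xmon X al * Xmon X be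
  = \sum_(i < N) c i dx dy * M mu i * (xt i ^+ dx * yt i ^+ dy).
Proof.
have E : forall al be, Tten W M Mp c mu al be * Xmon X al * Xmon X be =
   \sum_(i < N) \sum_(j : {ffun 'I_dy -> 'I_N})
    c i dx dy * M mu i * \prod_(k < dx) Mp i (al k)
      * \prod_(k < dy) W i (j k) * \prod_(k < dy) Mp (j k) (be k) * Xmon X al * Xmon X be.
  move=> al be; rewrite /Tten !mulr_suml; apply: eq_bigr => i _; by rewrite !mulr_suml.
rewrite (eq_bigr _ (fun al _ => eq_bigr _ (fun be _ => E al be))).
under eq_bigr do rewrite exchange_big.
rewrite exchange_big /=; apply: eq_bigr => i _.
rewrite -L1 -L2 mulr_suml mulr_sumr; apply: eq_bigr => al _.
rewrite !mulr_sumr; apply: eq_bigr => be _.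
rewrite !mulr_sumr; apply: eq_bigr => j _; ring.
Qed.

Lemma SD_eq K : SD M Mp c mu X K = \sum_(i < N) M mu i * rowS (c i) (xt i) K.
Proof.
rewrite /SD /rowS; under eq_big_nat => dx _ do rewrite Dd.
rewrite exchange_big /=; apply: eq_bigr => i _.
rewrite mulr_sumr; apply: eq_big_nat => dx _; ring.
Qed.

Lemma SW_eq K : SW W M Mp c mu X K = \sum_(i < N) M mu i * colS (c i) (yt i) K.
Proof.
rewrite /SW /colS; under eq_big_nat => dx _ do rewrite Wd.
rewrite exchange_big /=; apply: eq_bigr => i _.
rewrite mulr_sumr; apply: eq_big_nat => dx _; ring.
Qed.

Lemma ST_eq K : ST W M Mp c mu X K = \sum_(i < N) M mu i * innS (c i) (xt i) (yt i) K.
Proof.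
rewrite /ST /innS.
under eq_big_nat => dx _ do under eq_big_nat => dy _ do rewrite Td.
under eq_big_nat => dx _ do rewrite exchange_big.
rewrite exchange_big /=; apply: eq_bigr => i _.
rewrite mulr_sumr; apply: eq_big_nat => dx _.
rewrite mulr_sumr; apply: eq_big_nat => dy _; ring.
Qed.
End H.

Lemma le_sum1 {R : realType} {N : nat} (F : 'I_N -> R) i :
  (forall j, 0 <= F j) -> F i <= \sum_(j < N) F j.
Proof. by move=> H; rewrite (bigD1 i) //= lerDl sumr_ge0. Qed.

Theorem propositionS48 (R : realType) (n N : nat)
    (W : 'M[R]_N) (M : 'M[R]_(n, N)) (Mp : 'M[R]_(N, n))
    (h : 'I_N -> R -> R -> R) :
  is_MP_pinv M Mp ->
  (forall i a b, analytic_at (h i) a b) ->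
  exists (c : 'I_N -> nat -> nat -> R) (C : 'I_n -> R) (r : R), 0 < r /\
    forall X : 'cV[R]_n, (forall nu, `|X nu ord0| < r) ->
    forall mu : 'I_n,
    exists lD lW lT : R,
      [/\ SD M Mp c mu X K @[K --> \oo] --> lD,
          SW W M Mp c mu X K @[K --> \oo] --> lW,
          ST W M Mp c mu X K @[K --> \oo] --> lT &
          reduced_field W M Mp h X mu = C mu + lD + lW + lT].
Proof.
move=> _ Han.
have Hc : forall i : 'I_N, exists cr : (nat -> nat -> R) * R, 0 < cr.2 /\
   forall x y, `|x - 0| < cr.2 -> `|y - 0| < cr.2 ->
      cvgn (dps (fun p q => `|cr.1 p q|) 0 0 `|x - 0| `|y - 0|) /\
      dps cr.1 0 0 x y K @[K --> \oo] --> h i x y.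
  by move=> i; have [c [r [r0 Hr]]] := Han i 0 0; exists (c, r).
have [f Hf] := choice Hc.
pose c i := (f i).1.
pose rho := (1 + \sum_(i < N) ((f i).2)^-1)^-1.
have S0 : 0 <= \sum_(i < N) ((f i).2)^-1.
  by apply: sumr_ge0 => i _; rewrite invr_ge0 ltW // (Hf i).1.
have rho0 : 0 < rho by rewrite invr_gt0; lra.
have rhole : forall i, rho <= (f i).2.
  move=> i; have fi0 := (Hf i).1.
  rewrite -[leRHS]invrK lef_pV2 ?posrE ?invr_gt0 //; last by lra.
  have H1 : (f i).2^-1 <= \sum_(j < N) (f j).2^-1.
    by apply: (@le_sum1 _ _ (fun j => ((f j).2)^-1) _) => j; rewrite invr_ge0 ltW // (Hf j).1.

  lra.
pose A := 1 + \sum_(i < N) \sum_(a < n) `|Mp i a|.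
pose B := 1 + \sum_(i < N) \sum_(j < N) `|W i j|.
have A1 : 1 <= A by rewrite /A lerDl; apply: sumr_ge0 => i _; apply: sumr_ge0.
have B1 : 1 <= B by rewrite /B lerDl; apply: sumr_ge0 => i _; apply: sumr_ge0.
pose r := rho / (A * B).
have ABr : A * B * r = rho by rewrite /r mulrC -mulrA mulVf ?mulr1 //; nra.
have r0 : 0 < r by rewrite /r divr_gt0 //; nra.
exists c, (fun mu => \sum_(i < N) M mu i * c i 0%N 0%N), r; split => // X HX mu.
pose xt i := (Mp *m X) i ord0.
pose yt i := (W *m (Mp *m X)) i ord0.
have xb : forall i, `|xt i| <= (A - 1) * r.
  move=> i; rewrite /xt mxE; apply: le_trans (ler_norm_sum _ _ _) _.
  apply: le_trans (_ : \sum_(a < n) `|Mp i a| * r <= _).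
    by apply: ler_sum => a _; rewrite normrM ler_wpM2l // ltW.
  have -> : A - 1 = \sum_(i < N) \sum_(a < n) `|Mp i a| by rewrite /A; ring.
  rewrite -mulr_suml; apply: (ler_wpM2r (ltW r0)).
  by apply: (@le_sum1 _ _ (fun j => \sum_(a < n) `|Mp j a|) _) => j; apply: sumr_ge0.
have yb : forall i, `|yt i| <= (B - 1) * (A * r).
  move=> i; rewrite /yt mxE; apply: le_trans (ler_norm_sum _ _ _) _.
  apply: le_trans (_ : \sum_(j < N) `|W i j| * (A * r) <= _).
    apply: ler_sum => j _; rewrite normrM ler_wpM2l //.
    by apply: le_trans (xb j) _; rewrite ler_wpM2r ?ltW //; lra.
  have Ar0 : 0 <= A * r by apply: mulr_ge0; [lra | exact: ltW].
  rewrite -mulr_suml; apply: (ler_wpM2r Ar0).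
  have -> : B - 1 = \sum_(i < N) \sum_(j < N) `|W i j| by rewrite /B; ring.
  by apply: (@le_sum1 _ _ (fun j => \sum_(a < N) `|W j a|) _) => j; apply: sumr_ge0.
have Hd : forall i, exists l : R * R * R,
   [/\ rowS (c i) (xt i) K @[K --> \oo] --> l.1.1,
     colS (c i) (yt i) K @[K --> \oo] --> l.1.2, innS (c i) (xt i) (yt i) K @[K --> \oo] --> l.2 &
     h i (xt i) (yt i) = c i 0%N 0%N + l.1.1 + l.1.2 + l.2].
  move=> i.
  have hx : `|xt i| < (f i).2.
    apply: lt_le_trans (rhole i); apply: le_lt_trans (xb i) _; rewrite -ABr; nra.
  have hy : `|yt i| < (f i).2.
    apply: lt_le_trans (rhole i); apply: le_lt_trans (yb i) _; rewrite -ABr; nra.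
  have [lr [lc [li [H1 H2 H3 H4]]]] := @decomp R (c i) (f i).2 (h i) (xt i) (yt i) (Hf i).2 hx hy.
  by exists (lr, lc, li).
have [g Hg] := choice Hd.
exists (\sum_(i < N) M mu i * (g i).1.1), (\sum_(i < N) M mu i * (g i).1.2),
  (\sum_(i < N) M mu i * (g i).2); split.
- under eq_cvg do rewrite SD_eq.
  apply: sum_cvg_fin => i; apply: cvgMl_tmp; by case: (Hg i).
- under eq_cvg do rewrite SW_eq.
  apply: sum_cvg_fin => i; apply: cvgMl_tmp; by case: (Hg i).
- under eq_cvg do rewrite ST_eq.
  apply: sum_cvg_fin => i; apply: cvgMl_tmp; by case: (Hg i).
rewrite /reduced_field /=.
rewrite -!big_split /=; apply: eq_bigr => i _.
have [_ _ _ ->] := Hg i; ring.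
Qed.
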